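(* Let $k,n$ be integers with $2\le k\le n$. Then $d^E_3(n,k)\le \max\{d^E_3(n-1,k-1),\,d^E_3(n-2,k-2)\}$.
   Context: For $k\le n$, $d^E_3(n,k)$ denotes the largest minimum distance among all ternary Euclidean LCD $[n,k]$ codes, i.e. $k$-dimensional subspaces $C\subseteq\mathbb{F}_3^n$ with $C\cap C^{\perp_E}=\{0\}$, where $C^{\perp_E}$ is the dual with respect to $\langle x,y\rangle_E=\sum x_iy_i$. *)

(* Defs.v *)
From mathcomp Require Import all_boot all_order all_algebra.
Set Implicit Arguments. Unset Strict Implicit. Unset Printing Implicit Defensive.
Import GRing.Theory.
Local Open Scope ring_scope.

Notation F3 := ('F_3).

Definition wt (n : nat) (u : 'rV[F3]_n) : nat := #|[set i | u 0 i != 0]|.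

(* A linear [n,k] code is the row space of a row-free k x n generator matrix G.
   Its Euclidean dual is the row space of kermx G^T (all u with u *m G^T = 0,
   i.e. u orthogonal to every row of G). *)
Definition euclid_dual (k n : nat) (G : 'M[F3]_(k, n)) : 'M[F3]_n := kermx G^T.

Definition is_LCD (k n : nat) (G : 'M[F3]_(k, n)) : bool :=
  \rank (G :&: euclid_dual G)%MS == 0%N.

(* Minimum distance: least weight of a nonzero codeword (convention: 0 for
   the zero code, which has no nonzero codewords). *)
Definition min_dist (k n : nat) (G : 'M[F3]_(k, n)) : nat :=
  if [exists u : 'rV[F3]_n, (u <= G)%MS && (u != 0)]
  then \big[minn/n]_(u : 'rV[F3]_n | (u <= G)%MS && (u != 0)) wt u
  else 0%N.

Definition dE3 (n k : nat) : nat :=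
  \max_(G : 'M[F3]_(k, n) | row_free G && is_LCD G) min_dist G.

(* Main.v *)
Require Import Defs.
From mathcomp Require Import all_boot all_order all_algebra.
From mathcomp Require Import zify.
Set Implicit Arguments. Unset Strict Implicit. Unset Printing Implicit Defensive.
Import GRing.Theory.
Local Open Scope ring_scope.

Lemma inj_unit m (B : 'M[F3]_m) :
  (forall p (Y : 'M[F3]_(p, m)), Y *m B = 0 -> Y = 0) -> B \in unitmx.
Proof.
move=> H; rewrite -row_free_unit -kermx_eq0; apply/eqP/H; exact: mulmx_ker.
Qed.

Lemma unit_inj m p (B : 'M[F3]_m) (Y : 'M[F3]_(p, m)) :
  B \in unitmx -> Y *m B = 0 -> Y = 0.
Proof.
move=> uB YB; by rewrite -[Y]mulmx1 -(mulmxV uB) mulmxA YB mul0mx.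
Qed.

Lemma lcd_unit k n (G : 'M[F3]_(k, n)) :
  row_free G -> is_LCD G -> G *m G^T \in unitmx.
Proof.
move=> rG lG; apply: inj_unit => p Y HY.
have sub : (Y *m G <= (G :&: euclid_dual G))%MS.
  rewrite sub_capmx submxMl /euclid_dual sub_kermx -mulmxA HY eqxx //.
move: lG; rewrite /is_LCD mxrank_eq0 => /eqP c0.
move: sub; rewrite c0 submx0 => /eqP YG.
apply: (row_free_inj rG); by rewrite YG mul0mx.
Qed.

Lemma wt_le n (u : 'rV[F3]_n) : (wt u <= n)%N.
Proof. by rewrite /wt (leq_trans (max_card _)) // card_ord. Qed.

Lemma bigmin_le (T : eqType) (r : seq T) (P : pred T) (F : T -> nat) n u :
  u \in r -> P u -> (\big[minn/n]_(j <- r | P j) F j <= F u)%N.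
Proof.
elim: r => //= a r IH; rewrite in_cons big_cons => /orP[/eqP <- Pu|ur Pu].
  by rewrite Pu geq_minl.
case: ifP => _; last exact: IH.
by rewrite geq_min IH ?orbT.
Qed.

Lemma min_dist_le k n (G : 'M[F3]_(k, n)) (y : 'rV[F3]_k) :
  row_free G -> y != 0 -> (min_dist G <= wt (y *m G))%N.
Proof.
move=> rG y0.
have yG0 : y *m G != 0.
  apply: contra y0 => /eqP yG; apply/eqP; apply: (row_free_inj rG); by rewrite yG mul0mx.
have Pu : (y *m G <= G)%MS && (y *m G != 0) by rewrite submxMl yG0.
rewrite /min_dist; case: ifP => _ //.
apply: (@bigmin_le _ _ (fun u : 'rV[F3]_n => (u <= G)%MS && (u != 0)) (@wt n) n (y *m G)) => //; exact: mem_index_enum.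
Qed.

Lemma dE3_ge m n (X : 'M[F3]_(m, n)) d :
  X *m X^T \in unitmx -> (0 < m)%N ->
  (forall y : 'rV[F3]_m, y != 0 -> (d <= wt (y *m X))%N) -> (d <= dE3 n m)%N.
Proof.
move=> uX m0 Hd.
have inj : forall p (Y : 'M[F3]_(p, m)), Y *m X = 0 -> Y = 0.
  move=> p Y YX; apply: (unit_inj uX); by rewrite mulmxA YX mul0mx.
have rX : row_free X.
  rewrite -kermx_eq0; apply/eqP/inj; exact: mulmx_ker.
have lX : is_LCD X.
  rewrite /is_LCD mxrank_eq0; set C := (X :&: euclid_dual X)%MS.
  have C1 : C *m pinvmx X *m X = C := mulmxKpV (capmxSl X (euclid_dual X)).
  have C2 : C *m X^T = 0 by apply/sub_kermxP; exact: capmxSr.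
  have : C *m pinvmx X = 0.
    apply: (unit_inj uX); by rewrite mulmxA C1 C2.
  by move=> e; rewrite -C1 e mul0mx.
apply: (@leq_trans (min_dist X)); last first.
  by apply: (@leq_bigmax_cond _ (fun G : 'M[F3]_(m, n) => row_free G && is_LCD G) (fun G : 'M[F3]_(m, n) => min_dist G)); rewrite rX lX.
pose y : 'rV[F3]_m := delta_mx 0 (Ordinal m0).
have y0 : y != 0.
  apply/negP => /eqP/matrixP /(_ 0 (Ordinal m0)); rewrite !mxE eqxx /=.
  by move/eqP; rewrite oner_eq0.
have dn : (d <= n)%N by apply: leq_trans (Hd y y0) (wt_le _).
rewrite /min_dist; case: ifP => [_|]; last first.
  move/negbT/existsPn/(_ (y *m X)); rewrite submxMl /=.
  suff -> : y *m X != 0 by [].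
  apply: contra y0 => /eqP yX; apply/eqP; exact: inj.
apply: (big_ind (fun x => d <= x)%N) => //.
  by move=> a b ha hb; rewrite leq_min ha hb.
move=> u /andP[uS u0]; rewrite -(mulmxKpV uS); apply: Hd.
by apply: contra u0 => /eqP e; rewrite -(mulmxKpV uS) e mul0mx.
Qed.
Lemma col'_mul p m n (Y : 'M[F3]_(p, m)) (X : 'M[F3]_(m, n.+1)) i :
  Y *m col' i X = col' i (Y *m X).
Proof. by apply/matrixP => a b; rewrite !mxE; apply: eq_bigr => j _; rewrite mxE. Qed.

Lemma del_gram m n (X : 'M[F3]_(m, n.+1)) i : (forall b, X b i = 0) ->
  col' i X *m (col' i X)^T = X *m X^T.
Proof.
move=> X0; apply/matrixP => a b; rewrite !mxE.
rewrite [RHS](bigD1_ord i) //= !mxE X0 mul0r add0r.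
by apply: eq_bigr => j _; rewrite !mxE.
Qed.

Lemma del_wt n (u : 'rV[F3]_n.+1) i : u 0 i = 0 -> wt (col' i u) = wt u.
Proof.
move=> u0; rewrite /wt -!sum1dep_card.
rewrite [RHS]big_mkcond [RHS](bigD1_ord i) //= u0 eqxx add0n /=.
rewrite big_mkcond; by apply: eq_bigr => j _; rewrite !mxE.
Qed.
Lemma core k (M : 'M[F3]_k) p (E : 'M[F3]_(k, p)) :
  M \in unitmx -> M^T = M -> E^T *m invmx M *m E \in unitmx ->
  exists m (A : 'M[F3]_(m, k)), [/\ m = (k - p)%N, A *m M *m A^T \in unitmx,
     row_free A & A *m E = 0].
Proof.
move=> uM sM uN; set N := E^T *m invmx M *m E in uN.
set K := kermx E.
have rE : \rank E = p.
  apply/eqP; rewrite eqn_leq rank_leq_col /=.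
  rewrite -{1}(mxrank_unit uN) /N -mulmxA (leq_trans (mxrankM_maxl _ _)) //.
  by rewrite mxrank_tr.
exists (\rank K), (row_base K).
have AE : row_base K *m E = 0.
  apply/sub_kermxP; by rewrite eq_row_base.
split; [by rewrite mxrank_ker rE | | exact: row_base_free | exact: AE].
set A := row_base K.
apply: inj_unit => q Y HY.
set Z := Y *m A.
have ZE : Z *m E = 0 by rewrite /Z -mulmxA AE mulmx0.
set W := invmx M *m E.
set Q := 1%:M - E *m invmx N *m W^T.
have WE : W^T *m E = N.
  by rewrite /W trmx_mul trmx_inv sM /N.
have QE : Q *m E = 0.
  rewrite /Q mulmxBl mul1mx -!mulmxA WE mulVmx // mulmx1 subrr //.
have QA : (Q <= A)%MS by rewrite eq_row_base; apply/sub_kermxP.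
have Q1 : Z *m M *m Q^T = 0.
  have QT : Q *m pinvmx A *m A = Q := mulmxKpV QA.
  rewrite -QT trmx_mul /Z !mulmxA.
  rewrite !mulmxA in HY; by rewrite HY mul0mx.
have Q2 : Z *m M *m (E *m invmx N *m W^T)^T = 0.
  rewrite !trmx_mul !trmxK /W !mulmxA -(mulmxA Z) mulmxV // mulmx1 ZE.
  by rewrite !mul0mx.
have ZM : Z *m M = 0.
  have : Z *m M *m (Q + E *m invmx N *m W^T)^T = 0 by rewrite linearD /= mulmxDr Q1 Q2 addr0.
  by rewrite /Q subrK trmx1 mulmx1.
have Z0 : Z = 0 := unit_inj uM ZM.
apply: (row_free_inj (row_base_free K)); by rewrite mul0mx.
Qed.

Definition Sel n p (f : 'I_p -> 'I_n) : 'M[F3]_(n, p) := \matrix_(r, c) (r == f c)%:R.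

Lemma mulSel m n p (f : 'I_p -> 'I_n) (X : 'M[F3]_(m, n)) a c :
  (X *m Sel f) a c = X a (f c).
Proof.
rewrite mxE (bigD1 (f c)) //= mxE eqxx mulr1 big1 ?addr0 // => j /negbTE jf.
by rewrite mxE jf mulr0.
Qed.

Lemma SelTmul m n p (f : 'I_p -> 'I_n) (X : 'M[F3]_(n, m)) c b :
  ((Sel f)^T *m X) c b = X (f c) b.
Proof.
rewrite mxE (bigD1 (f c)) //= !mxE eqxx mul1r big1 ?addr0 // => j /negbTE jf.
by rewrite !mxE jf mul0r.
Qed.

Lemma step k n (G : 'M[F3]_(k, n)) p (f : 'I_p -> 'I_n) :
  row_free G -> G *m G^T \in unitmx ->
  (Sel f)^T *m (G^T *m invmx (G *m G^T) *m G) *m Sel f \in unitmx ->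
  exists X : 'M[F3]_(k - p, n), [/\ X *m X^T \in unitmx, forall c b, X b (f c) = 0 &
     forall y, y != 0 -> (min_dist G <= wt (y *m X))%N].
Proof.
move=> rG uM uN.
have sM : (G *m G^T)^T = G *m G^T by rewrite trmx_mul trmxK.
have uN' : (G *m Sel f)^T *m invmx (G *m G^T) *m (G *m Sel f) \in unitmx.
  by rewrite trmx_mul !mulmxA in uN *.
have [m [A [em uA rA AE]]] := core uM sM uN'.
subst m; exists (A *m G); split.
- by rewrite trmx_mul !mulmxA in uA *.
- move=> c b; by rewrite -mulSel -mulmxA AE mxE.
- move=> y y0; rewrite mulmxA; apply: min_dist_le => //.
  apply: contra y0 => /eqP yA; apply/eqP; apply: (row_free_inj rA); by rewrite yA mul0mx.
Qed.

Lemma delete m n (X : 'M[F3]_(m, n.+1)) i d :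
  X *m X^T \in unitmx -> (forall b, X b i = 0) ->
  (forall y, y != 0 -> (d <= wt (y *m X))%N) ->
  col' i X *m (col' i X)^T \in unitmx /\
  (forall y, y != 0 -> (d <= wt (y *m col' i X))%N).
Proof.
move=> uX X0 Hd; split; first by rewrite del_gram.
move=> y y0; rewrite col'_mul del_wt ?Hd //.
by rewrite mxE big1 // => j _; rewrite X0 mulr0.
Qed.

Theorem corollary5p4 (n k : nat) :
  (2 <= k)%N -> (k <= n)%N ->
  (dE3 n k <= maxn (dE3 n.-1 k.-1) (dE3 n.-2 k.-2))%N.
Proof.
move=> k2; case: n => [|[|n]] kn; try lia; rewrite /=.
apply/bigmax_leqP => G /andP[rG lG].
have uM := lcd_unit rG lG.
set M := G *m G^T in uM.
set P := G^T *m invmx M *m G.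
have sM : M^T = M by rewrite trmx_mul trmxK.
have sP : P^T = P by rewrite /P !trmx_mul trmxK trmx_inv sM mulmxA.
have NE : forall p (f : 'I_p -> 'I_n.+2) a b, ((Sel f)^T *m P *m Sel f) a b = P (f a) (f b).
  by move=> p f a b; rewrite mulSel SelTmul.
case: (boolP [exists i, P i i != 0]) => [/existsP[i Pii]|/existsPn Hdiag].
  pose f : 'I_1 -> 'I_n.+2 := fun _ => i.
  have uN : (Sel f)^T *m P *m Sel f \in unitmx.
    by rewrite unitmxE det_mx11 NE unitfE.
  have [X [uX X0 HX]] := step rG uM uN.
  have [uX' HX'] := delete uX (fun b => X0 ord0 b) HX.
  apply: leq_trans (leq_maxl _ _).
  rewrite -subn1 /=; apply: dE3_ge uX' _ HX'; lia.
have trk : \tr P = k%:R.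
  by rewrite /P mxtrace_mulC !mulmxA -/M mulmxV // mxtrace1.
have tr0 : \tr P = 0.
  rewrite /mxtrace big1 // => i0 _; move: (Hdiag i0). by move/negPn/eqP.
have k3 : (k %% 3 = 0)%N.
  have := val_Fp_nat (p:=3) isT k; by rewrite -trk tr0.
have k0 : (0 < k)%N by lia.
case: (boolP [exists i, exists j, P i j != 0]) => [/existsP[i /existsP[j Pij]] | /existsPn Hz]; last first.
  have P0 : P = 0.
    apply/matrixP => a b; move/existsPn: (Hz a) => /(_ b) /negPn /eqP ->; by rewrite mxE.
  have HM : G *m P *m G^T = M by rewrite /P !mulmxA -/M mulmxV // mul1mx.
  move: HM; rewrite P0 mulmx0 mul0mx => HM0.
  have := mulmxV uM; rewrite -HM0 mul0mx => /matrixP /(_ (Ordinal k0) (Ordinal k0)).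
  by rewrite !mxE eqxx => /eqP; rewrite eq_sym oner_eq0.
have ij : i != j.
  apply/eqP => eij; move: Pij; rewrite -eij => Pii; by move: (Hdiag i); rewrite Pii.
have Pii0 : P i i = 0 by move/negPn/eqP: (Hdiag i).
have Pjj0 : P j j = 0 by move/negPn/eqP: (Hdiag j).
have Pji : P j i = P i j by rewrite -{1}sP mxE.
pose f : 'I_2 -> 'I_n.+2 := fun c => if c == 0 then i else j.
have uN : (Sel f)^T *m P *m Sel f \in unitmx.
  apply: inj_unit => q Y HY.
  have H0 : forall r, (Y *m ((Sel f)^T *m P *m Sel f)) r 0 = Y r 1 * P i j.
    move=> r; rewrite mxE big_ord_recl big_ord1 !NE /f /= Pii0 mulr0 add0r Pji.
    by congr (Y r _ * _); apply: val_inj.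
  have H1 : forall r, (Y *m ((Sel f)^T *m P *m Sel f)) r 1 = Y r 0 * P i j.
    move=> r; rewrite mxE big_ord_recl big_ord1 !NE /f /= Pjj0 mulr0 addr0.
    by [].
  have Y1 : forall r, Y r 1 = 0.
    move=> r; have := H0 r; rewrite HY mxE => /esym/eqP; rewrite mulf_eq0 (negbTE Pij) orbF.
    by move/eqP.
  have Y0 : forall r, Y r 0 = 0.
    move=> r; have := H1 r; rewrite HY mxE => /esym/eqP; rewrite mulf_eq0 (negbTE Pij) orbF.
    by move/eqP.
  apply/matrixP => r [[|[|c]] Hc]; rewrite mxE.
  - by rewrite -(Y0 r); congr (Y r _); apply: val_inj.
  - by rewrite -(Y1 r); congr (Y r _); apply: val_inj.
  - by [].
have [X [uX X0 HX]] := step rG uM uN.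
have [j' ej _] := unlift_some ij.
have [uX1 HX1] := delete uX (fun b => X0 0 b) HX.
have X10 : forall b, col' i X b j' = 0.
  by move=> b; rewrite mxE -ej (X0 1 b).
have [uX2 HX2] := delete uX1 X10 HX1.
apply: leq_trans (leq_maxr _ _).
rewrite -subn2; apply: dE3_ge uX2 _ HX2; lia.
Qed.
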